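(* Let $\mathfrak g$ be a nilpotent Lie algebra of step $s$, $\overline X\in\mathfrak g/[\mathfrak g,\mathfrak g]$, and $x\in\mathfrak g$ a representative of $\overline X$. Define $\mathfrak g^{(0)}=\mathfrak g^{(1)}=\mathfrak g$ and $\mathfrak g^{(i+1)}=[\mathfrak g,\mathfrak g^{(i)}]+[x,\mathfrak g^{(i-1)}]$ for $i\ge1$. Then $\mathfrak g^{(2)}=[\mathfrak g,\mathfrak g]$, and for $k\ge3$, $\mathfrak g^{(k)}$ is the linear span of the iterated brackets $[x_1,[x_2,\dots[x_{j-1},x_j]\dots]]$ with either $j\ge k$, or $j<k$ and at least $k-j$ of the $x_i$ congruent to $x$ modulo $[\mathfrak g,\mathfrak g]$. In particular the sequence $(\mathfrak g^{(i)})$ depends only on $\overline X$ and not on $x$, and $[\mathfrak g^{(i)},\mathfrak g^{(j)}]\subseteq\mathfrak g^{(i+j)}$ for all $i,j\ge1$. Moreover $\mathfrak g^{[i]}\subseteq\mathfrak g^{(i)}\subseteq\mathfrak g^{[\lfloor i/2\rfloor+1]}$ for all $i\ge1$, and $\mathfrak g^{(2s)}=0$.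
   Context: $\mathfrak g^{[1]}=\mathfrak g$, $\mathfrak g^{[i+1]}=[\mathfrak g,\mathfrak g^{[i]}]$ is the descending central series; step $s$ means $\mathfrak g^{[s+1]}=0$. *)

(* Defs.v *)
(* Lie algebras over a field K, carried by an lmodType K.
   Subspaces are represented as predicates V -> Prop (no finite-dimensionality
   is assumed). *)
From mathcomp Require Import all_boot all_order all_algebra.
Set Implicit Arguments. Unset Strict Implicit. Unset Printing Implicit Defensive.
Import GRing.Theory.
Local Open Scope ring_scope.

Section Lie.
Variables (K : fieldType) (V : lmodType K).

Definition is_lie_bracket (br : V -> V -> V) : Prop :=
  [/\ (forall (a : K) (u w z : V), br (a *: u + w) z = a *: br u z + br w z),
      (forall (a : K) (z u w : V), br z (a *: u + w) = a *: br z u + br z w),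
      (forall u : V, br u u = 0) &
      (forall u w z : V, br u (br w z) + br w (br z u) + br z (br u w) = 0)].

Definition full : V -> Prop := fun _ => True.
Definition zero_sp : V -> Prop := fun v => v = 0.
Definition sub_sp (A B : V -> Prop) : Prop := forall v, A v -> B v.
Definition eq_sp (A B : V -> Prop) : Prop := forall v, A v <-> B v.

Definition is_subspace (W : V -> Prop) : Prop :=
  W 0 /\ forall (a : K) (u w : V), W u -> W w -> W (a *: u + w).

Definition lspan (A : V -> Prop) : V -> Prop :=
  fun v => forall W, is_subspace W -> sub_sp A W -> W v.

Definition sum_sp (A B : V -> Prop) : V -> Prop := lspan (fun v => A v \/ B v).

Variable br : V -> V -> V.

Definition br_sp (A B : V -> Prop) : V -> Prop :=
  lspan (fun v => exists a b, [/\ A a, B b & v = br a b]).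

Fixpoint lcs (n : nat) : V -> Prop :=
  match n with
  | 0 | 1 => full
  | S m => br_sp full (lcs m)
  end.

Fixpoint xfilt (x : V) (n : nat) : V -> Prop :=
  match n with
  | 0 | 1 => full
  | S ((S m) as p) => sum_sp (br_sp full (xfilt x p))
                              (br_sp (fun y => y = x) (xfilt x m))
  end.

(* iterated bracket [x_1, [x_2, ... [x_{j-1}, x_j] ...]] of the list
   [:: x_1; ...; x_j]  (empty list gives 0, singleton gives x_1) *)
Fixpoint nest (l : seq V) : V :=
  match l with
  | [::] => 0
  | [:: a] => a
  | a :: l' => br a (nest l')
  end.

End Lie.

(* Main.v *)
Require Import Defs.
From mathcomp Require Import all_boot all_order all_algebra.
From mathcomp Require Import zify.
From Stdlib Require Import ClassicalEpsilon.
Import GRing.Theory.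
Local Open Scope ring_scope.

Lemma card_nth (T : Type) (x0 : T) (p : pred T) (l : seq T) :
  #|[set i : 'I_(size l) | p (nth x0 l i)]| = count p l.
Proof.
rewrite cardE /enum_mem size_filter -enumT.
transitivity (count p (mkseq (nth x0 l) (size l))); last by rewrite mkseq_nth.
rewrite /mkseq -val_enum_ord -map_comp count_map.
by apply: eq_count => i; rewrite /= inE.
Qed.

Section Gen.
Variables (K : fieldType) (V : lmodType K).

Lemma sub0 (W : V -> Prop) : is_subspace W -> W 0.
Proof. by case. Qed.
Lemma subD (W : V -> Prop) u w : is_subspace W -> W u -> W w -> W (u + w).
Proof. by case=> _ H Hu Hw; have := H 1 u w Hu Hw; rewrite scale1r. Qed.
Lemma subZ (W : V -> Prop) a u : is_subspace W -> W u -> W (a *: u).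
Proof. by case=> H0 H Hu; have := H a u 0 Hu H0; rewrite addr0. Qed.
Lemma subN (W : V -> Prop) u : is_subspace W -> W u -> W (- u).
Proof. by move=> HW Hu; rewrite -scaleN1r; apply: subZ. Qed.
Lemma subB (W : V -> Prop) u w : is_subspace W -> W u -> W w -> W (u - w).
Proof. by move=> HW Hu Hw; apply: subD => //; apply: subN. Qed.

Arguments sub0 {W}. Arguments subD {W u w}. Arguments subZ {W} a {u}.
Arguments subN {W u}. Arguments subB {W u w}.

Lemma lspan_sub (A : V -> Prop) : is_subspace (lspan A).
Proof.
split; first by move=> W [].
move=> a u w Hu Hw W HW HA; case: (HW) => _ H; apply: H; [exact: Hu|exact: Hw].
Qed.
Lemma lspan_ext (A : V -> Prop) v : A v -> lspan A v.
Proof. by move=> Hv W _ HA; apply: HA. Qed.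
Lemma lspan_min (A W : V -> Prop) : is_subspace W -> sub_sp A W -> sub_sp (lspan A) W.
Proof. by move=> HW HA v Hv; apply: Hv. Qed.
Lemma lspan_eq (A B : V -> Prop) : (forall v, A v <-> B v) -> eq_sp (lspan A) (lspan B).
Proof.
move=> H v; split => Hv W HW HS; apply: Hv => // u Hu; apply: HS; by apply/H.
Qed.
Lemma full_sub : is_subspace (@full K V).
Proof. by []. Qed.
Lemma sum_min (A B W : V -> Prop) : is_subspace W -> sub_sp A W -> sub_sp B W ->
  sub_sp (sum_sp A B) W.
Proof. by move=> HW HA HB; apply: lspan_min => // v [/HA|/HB]. Qed.
Lemma sum_inl (A B : V -> Prop) v : A v -> sum_sp A B v.
Proof. by move=> Hv; apply: lspan_ext; left. Qed.
Lemma sum_inr (A B : V -> Prop) v : B v -> sum_sp A B v.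
Proof. by move=> Hv; apply: lspan_ext; right. Qed.

Variable br : V -> V -> V.
Hypothesis Hlie : is_lie_bracket br.

Lemma brDl u w z : br (u + w) z = br u z + br w z.
Proof. by case: Hlie => H _ _ _; have := H 1 u w z; rewrite !scale1r. Qed.
Lemma brDr z u w : br z (u + w) = br z u + br z w.
Proof. by case: Hlie => _ H _ _; have := H 1 z u w; rewrite !scale1r. Qed.
Lemma br0l z : br 0 z = 0.
Proof.
have h := brDl 0 0 z; rewrite addr0 in h.
have : br 0 z + br 0 z - br 0 z = br 0 z - br 0 z by rewrite -h.
by rewrite addrK subrr.
Qed.
Lemma br0r z : br z 0 = 0.
Proof.
have h := brDr z 0 0; rewrite addr0 in h.
have : br z 0 + br z 0 - br z 0 = br z 0 - br z 0 by rewrite -h.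
by rewrite addrK subrr.
Qed.
Lemma brZl a u z : br (a *: u) z = a *: br u z.
Proof. by case: Hlie => H _ _ _; have := H a u 0 z; rewrite !addr0 br0l addr0. Qed.
Lemma brZr a z u : br z (a *: u) = a *: br z u.
Proof. by case: Hlie => _ H _ _; have := H a z u 0; rewrite !addr0 br0r addr0. Qed.
Lemma brNl u z : br (- u) z = - br u z.
Proof. by rewrite -scaleN1r brZl scaleN1r. Qed.
Lemma brNr z u : br z (- u) = - br z u.
Proof. by rewrite -scaleN1r brZr scaleN1r. Qed.
Lemma brAS u w : br u w = - br w u.
Proof.
case: Hlie => _ _ H3 _.
have := H3 (u + w); rewrite brDl !brDr !H3 add0r addr0 => /eqP.
by rewrite addr_eq0 => /eqP.
Qed.
Lemma brJ a b c : br (br a b) c = br a (br b c) + br b (br c a).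
Proof.
case: Hlie => _ _ _ J.
rewrite [LHS]brAS.
by have := J c a b; rewrite -addrA addrC => /eqP; rewrite addr_eq0 => /eqP ->.
Qed.

Lemma Sr (W : V -> Prop) a : is_subspace W -> is_subspace (fun b => W (br a b)).
Proof.
move=> HW; split; first by rewrite br0r; apply: sub0.
by move=> c u w Hu Hw; rewrite brDr brZr; apply: subD => //; apply: subZ.
Qed.
Lemma Sl (W : V -> Prop) b : is_subspace W -> is_subspace (fun a => W (br a b)).
Proof.
move=> HW; split; first by rewrite br0l; apply: sub0.
by move=> c u w Hu Hw; rewrite brDl brZl; apply: subD => //; apply: subZ.
Qed.
Lemma Slfam (W : nat -> V -> Prop) (P : nat -> V -> Prop) :
  (forall j, is_subspace (W j)) ->
  is_subspace (fun a => forall j v, P j v -> W j (br a v)).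
Proof.
move=> HW; split; first by move=> j v _; rewrite br0l; apply: sub0.
move=> c u w Hu Hw j v Hv; rewrite brDl brZl.
apply: (subD (HW j)); first apply: (subZ c (HW j)).
  exact: Hu.
exact: Hw.
Qed.

Lemma br_sp_min (A B W : V -> Prop) : is_subspace W ->
  (forall a b, A a -> B b -> W (br a b)) -> sub_sp (br_sp br A B) W.
Proof. by move=> HW H; apply: lspan_min => // v [a [b [Ha Hb ->]]]; apply: H. Qed.
Lemma br_sp_in (A B : V -> Prop) a b : A a -> B b -> br_sp br A B (br a b).
Proof. by move=> Ha Hb; apply: lspan_ext; exists a, b. Qed.
Lemma sum_br_min (A1 B1 A2 B2 W : V -> Prop) : is_subspace W ->
  (forall a b, A1 a -> B1 b -> W (br a b)) ->
  (forall a b, A2 a -> B2 b -> W (br a b)) ->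
  sub_sp (sum_sp (br_sp br A1 B1) (br_sp br A2 B2)) W.
Proof. by move=> HW H1 H2; apply: sum_min => //; apply: br_sp_min. Qed.

Variable x : V.
Notation F := (xfilt br x).
Notation L := (lcs br).

Lemma F_sub k : is_subspace (F k).
Proof. by case: k => [|[|k]] //; apply: lspan_sub. Qed.
Lemma L_sub k : is_subspace (L k).
Proof. by case: k => [|[|k]] //; apply: lspan_sub. Qed.
Lemma Feq m n v : m = n -> F m v -> F n v.
Proof. by move=> ->. Qed.
Lemma Leq m n v : m = n -> L m v -> L n v.
Proof. by move=> ->. Qed.

Lemma c1 k g u : F k u -> F k.+1 (br g u).
Proof. case: k => [|k] Hu //; apply: sum_inl; exact: br_sp_in. Qed.
Lemma c2 k u : F k u -> F k.+2 (br x u).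
Proof. by move=> Hu; apply: sum_inr; exact: br_sp_in. Qed.

Lemma Fdec k : sub_sp (F k.+1) (F k).
Proof.
suff: sub_sp (F k.+1) (F k) /\ sub_sp (F k.+2) (F k.+1) by case.
elim: k => [|k [IH0 IH1]]; first by split.
split => //; apply: sum_br_min; first exact: F_sub.
  by move=> a b _ /IH1 Hb; apply: c1.
by move=> a b -> /IH0 Hb; apply: c2.
Qed.
Lemma Fdec_le m n : (m <= n)%N -> sub_sp (F n) (F m).
Proof.
elim: n => [|n IH]; first by rewrite leqn0 => /eqP ->.
rewrite leq_eqVlt => /orP [/eqP -> //|]; rewrite ltnS => /IH H v Hv.
by apply: H; apply: Fdec.
Qed.

Lemma Fbr i j u v : (1 <= i)%N -> (1 <= j)%N -> F i u -> F j v -> F (i + j) (br u v).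
Proof.
move: i j u v; elim/ltn_ind => i IH.
case: i IH => [|[|i]] IH //.
  by move=> j u v _ _ _ Hv; rewrite add1n; apply: c1.
move=> j u v _ Hj Hu Hv.
have HS : is_subspace (fun u => forall j v, (1 <= j)%N /\ F j v -> F (i.+2 + j) (br u v)).
  by apply: (Slfam (fun j => F (i.+2 + j)) (fun j v => (1 <= j)%N /\ F j v)) => j'; apply: F_sub.
simpl in Hu.
have HH := conj Hj Hv; clear Hj Hv; move: j v HH; move: u Hu; apply: sum_br_min => //.
- move=> g u' _ Hu' j' v' [Hj' Hv'].
  rewrite brJ; apply: (subD (F_sub _)).
    apply: (Feq ((i.+1 + j').+1)); first lia.
    by apply: c1; apply: IH.
  apply: (Feq (i.+1 + j'.+1)); first lia.
  apply: IH => //; rewrite brAS; apply: (subN (F_sub _)); exact: c1.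
- move=> a w -> Hw j' v' [Hj' Hv'].
  rewrite brJ; apply: (subD (F_sub _)).
    clear HS; case: i IH Hw => [|i] IH Hw.
      apply: (Fdec_le _ j'.+3); first lia.
      by apply: c2; apply: c1.
    apply: (Feq ((i.+1 + j').+2)); first lia.
    by apply: c2; apply: IH.
  have Hxv : F j'.+2 (br v' x) by rewrite brAS; apply: (subN (F_sub _)); exact: c2.
  clear HS; case: i IH Hw => [|i] IH Hw.
    apply: (Fdec_le _ j'.+3); first lia.
    by apply: c1.
  apply: (Feq (i.+1 + j'.+2)); first lia.
  by apply: IH.
Qed.


Lemma Lc1 n g v : L n v -> L n.+1 (br g v).
Proof. case: n => [|n] Hv //; exact: br_sp_in. Qed.

Lemma Ldec n : sub_sp (L n.+1) (L n).
Proof.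
elim: n => [|n IH] //; case: n IH => [|n] IH //.
by apply: br_sp_min; first exact: L_sub; move=> a b _ /IH; apply: Lc1.
Qed.
Lemma Ldec_le m n : (m <= n)%N -> sub_sp (L n) (L m).
Proof.
elim: n => [|n IH]; first by rewrite leqn0 => /eqP ->.
rewrite leq_eqVlt => /orP [/eqP -> //|]; rewrite ltnS => /IH H v Hv.
by apply: H; apply: Ldec.
Qed.

Lemma L_F i : sub_sp (L i) (F i).
Proof.
case: i => [|i] //; elim: i => [|i IH] //.
by apply: br_sp_min; first exact: F_sub; move=> a b _ /IH; apply: c1.
Qed.

Lemma F_L k : sub_sp (F k) (L (k./2).+1).
Proof.
suff: sub_sp (F k) (L (k./2).+1) /\ sub_sp (F k.+1) (L (k.+1./2).+1) by case.
elim: k => [|k [IH0 IH1]]; first by split.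
split => //; apply: sum_br_min; first exact: L_sub.
  move=> a b _ /IH1 Hb; apply: (Ldec_le _ ((k.+1)./2).+2).
    rewrite /=; rewrite !ltnS; exact: (half_leq (leqnSn k)).
  exact: Lc1.
by move=> a b -> /IH0 Hb; apply: Lc1.
Qed.

Lemma L2F2 v : L 2 v -> F 2 v.
Proof. exact: L_F. Qed.

Lemma indep x' : L 2 (x' - x) -> forall i, sub_sp (xfilt br x' i) (F i).
Proof.
move=> Hx' i.
suff: sub_sp (xfilt br x' i) (F i) /\ sub_sp (xfilt br x' i.+1) (F i.+1) by case.
elim: i => [|i [IH0 IH1]]; first by split.
split => //; apply: sum_br_min; first exact: F_sub.
  by move=> a b _ /IH1 Hb; apply: c1.
move=> a b -> /IH0 Hb.
have -> : x' = x + (x' - x) by rewrite addrC subrK.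
rewrite brDl; apply: (subD (F_sub _)); first exact: c2.
case: i IH0 IH1 Hb => [|i] _ _ Hb.
  by rewrite brAS; apply: (subN (F_sub _)); apply: c1.
apply: (Feq (2 + i.+1)); first lia.
by apply: Fbr => //; apply: L2F2.
Qed.

Definition p (y : V) : bool :=
  if excluded_middle_informative (L 2 (y - x)) then true else false.
Lemma pP y : p y = true <-> L 2 (y - x).
Proof. by rewrite /p; case: excluded_middle_informative. Qed.
Lemma px : p x = true.
Proof. by apply/pP; rewrite subrr; apply: (sub0 (L_sub _)). Qed.

Definition D k := lspan (fun v => exists l : seq V,
  [/\ v = nest br l, (0 < size l)%N & (k <= size l + count p l)%N]).

Lemma nest_cons a l : (0 < size l)%N -> nest br (a :: l) = br a (nest br l).
Proof. by case: l. Qed.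

Lemma D_G m a b : D m b -> D m.+1 (br a b).
Proof.
move: b; apply: lspan_min; first by apply: Sr; apply: lspan_sub.
move=> b [l [-> Hs Hk]]; apply: lspan_ext; exists (a :: l); split.
- by rewrite nest_cons.
- by [].
- rewrite /=; lia.
Qed.
Lemma D_x m b : D m b -> D m.+2 (br x b).
Proof.
move: b; apply: lspan_min; first by apply: Sr; apply: lspan_sub.
move=> b [l [-> Hs Hk]]; apply: lspan_ext; exists (x :: l); split.
- by rewrite nest_cons.
- by [].
- rewrite /= px; lia.
Qed.

Lemma F_D k : sub_sp (F k) (D k).
Proof.
have base : forall k v, (k <= 1)%N -> D k v.
  move=> k' v Hk; apply: lspan_ext; exists [:: v]; split => //=; lia.
suff: sub_sp (F k) (D k) /\ sub_sp (F k.+1) (D k.+1) by case.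
elim: k => [|k [IH0 IH1]]; first by split => v _; apply: base.
split => //; apply: sum_br_min; first exact: lspan_sub.
  by move=> a b _ /IH1 Hb; apply: D_G.
by move=> a b -> /IH0 Hb; apply: D_x.
Qed.

Lemma act2 y m u : p y = true -> (1 <= m)%N -> F m u -> F m.+2 (br y u).
Proof.
move=> /pP Hy Hm Hu.
have -> : y = x + (y - x) by rewrite addrC subrK.
rewrite brDl; apply: (subD (F_sub _)); first exact: c2.
apply: (Feq (2 + m)); first lia.
by apply: Fbr => //; apply: L2F2.
Qed.

Lemma nestW l : (2 <= size l)%N -> F (size l + count p l) (nest br l).
Proof.
elim: l => [|a l IH] //.
case: l IH => [|b [|c l]] IH // _.
  have Halt : br x x = 0 by case: Hlie.
  rewrite [nest _ _]/= [size _]/= [count _ _]/=.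
  case Ha: (p a); case Hb: (p b).
  - apply: (Feq 4) => //.
    have Hb' : L 2 (b - x) by apply/pP.
    have Ha' : L 2 (a - x) by apply/pP.
    have -> : br a b = br a x + br a (b - x) by rewrite -brDr addrC subrK.
    apply: (subD (F_sub _)).
      have -> : br a x = br (a - x) x by rewrite brDl brNl Halt subr0.
      rewrite brAS; apply: (subN (F_sub _)); apply: c2; exact: L2F2.
    by apply: act2 => //; apply: L2F2.
  - by apply: (Feq 3) => //; apply: act2.
  - apply: (Feq 3) => //.
    rewrite brAS; apply: (subN (F_sub _)); by apply: act2.
  - by apply: (Feq 2) => //; apply: c1.
have Hn := IH isT.
have -> : nest br [:: a, b, c & l] = br a (nest br [:: b, c & l]) by [].
move: Hn; set m := (size [:: b, c & l] + count p [:: b, c & l])%N => Hn.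
have Hm : m = (size l + (p b + (p c + count p l))).+2 by rewrite /m /=; lia.
case Ha: (p a).
  apply: (Feq m.+2); first by rewrite Hm /= Ha; lia.
  by apply: act2 => //; rewrite Hm.
apply: (Feq m.+1); first by rewrite Hm /= Ha; lia.
exact: c1.
Qed.

Lemma D_F k : (3 <= k)%N -> sub_sp (D k) (F k).
Proof.
move=> Hk; apply: lspan_min; first exact: F_sub.
move=> v [l [-> Hs Hl]].
case: l Hs Hl => [|a [|b l]] //=.
  by case: (p a) => /=; lia.
move=> _ Hl; apply: (Fdec_le _ (size (a :: b :: l) + count p (a :: b :: l))).
  by rewrite /=; lia.
exact: nestW.
Qed.

End Gen.

Theorem lemma2p1 (K : fieldType) (V : lmodType K) (br : V -> V -> V)
  (Hlie : is_lie_bracket br) (s : nat)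
  (Hstep : eq_sp (lcs br s.+1) (@zero_sp K V)) (x : V) :
  (* g^(2) = [g, g] *)
  eq_sp (xfilt br x 2) (lcs br 2) /\
  (* description of g^(k), k >= 3, by iterated brackets *)
  (forall k : nat, (3 <= k)%N ->
     eq_sp (xfilt br x k)
       (lspan (fun v => exists l : seq V,
          [/\ v = nest br l, (0 < size l)%N &
              ((k <= size l)%N \/
               ((size l < k)%N /\
                exists I : {set 'I_(size l)},
                  (k - size l <= #|I|)%N /\
                  (forall i : 'I_(size l), i \in I ->
                     lcs br 2 (nth 0 l i - x))))]))) /\
  (* the sequence depends only on x mod [g, g] *)
  (forall x' : V, lcs br 2 (x' - x) ->
     forall i : nat, eq_sp (xfilt br x' i) (xfilt br x i)) /\
  (* [g^(i), g^(j)] is contained in g^(i+j) *)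
  (forall i j : nat, (1 <= i)%N -> (1 <= j)%N ->
     sub_sp (br_sp br (xfilt br x i) (xfilt br x j)) (xfilt br x (i + j))) /\
  (* g^[i] <= g^(i) <= g^[floor(i/2)+1] *)
  (forall i : nat, (1 <= i)%N ->
     sub_sp (lcs br i) (xfilt br x i) /\
     sub_sp (xfilt br x i) (lcs br (i./2).+1)) /\
  (* g^(2s) = 0 *)
  eq_sp (xfilt br x (2 * s)%N) (@zero_sp K V).
Proof.
split.
  move=> v; split; [exact: (@F_L K V br x 2) | exact: (@L_F K V br x 2)].
split.
  move=> k Hk v.
  apply: (iff_trans (conj (@F_D K V br Hlie x k v) (@D_F K V br Hlie x k Hk v))).
  apply: lspan_eq => w; split.
    move=> [l [-> Hs Hc]]; exists l; split => //.
    case: (leqP k (size l)) => Hkl; first by left.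
    right; split => //.
    exists [set i : 'I_(size l) | p _ _ br x (nth 0 l i)]; split.
      rewrite card_nth; lia.
    by move=> i; rewrite inE => /(pP _ _ br x).
  move=> [l [-> Hs Hc]]; exists l; split => //.
  case: Hc => [Hkl|[Hlt [I [HI HIp]]]]; first lia.
  have : (#|I| <= count (p _ _ br x) l)%N.
    rewrite -(card_nth _ 0); apply: subset_leq_card; apply/subsetP => i Hi.
    by rewrite inE; apply/(pP _ _ br x); apply: HIp.
  lia.
split.
  move=> x' Hx' i v; split; first exact: (@indep K V br Hlie x x' Hx' i v).
  apply: (@indep K V br Hlie x' x _ i v).
  by rewrite -opprB; exact: (@subN K V _ _ (@L_sub K V br 2) Hx').
split.
  move=> i j Hi Hj; apply: br_sp_min; first exact: F_sub.
  by move=> a b Ha Hb; apply: (@Fbr K V br Hlie x).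
split.
  by move=> i Hi; split; [exact: L_F | exact: F_L].
move=> v; split.
  move=> /(@F_L K V br x); rewrite mul2n doubleK; exact: (proj1 (Hstep v)).
by move=> ->; apply: sub0; apply: F_sub.
Qed.
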